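(* Let $a_{12},a_{13},a_{23}\in C^\infty(\mathbb{R}^3)$ be nowhere-vanishing and suppose that $$\partial_1\!\left(\frac{a_{12}}{a_{13}}\right)=\partial_2\!\left(\frac{a_{12}}{a_{23}}\right)=\partial_3\!\left(\frac{a_{13}}{a_{23}}\right)=0 .$$ Then $F_1=a_{12}\,\partial_1\smile\partial_2+a_{13}\,\partial_1\smile\partial_3+a_{23}\,\partial_2\smile\partial_3$ is quasibasic: there exist smooth functions $f_1,f_2,f_3$, with $f_i$ depending only on $x_i$, and a smooth function $\varphi$ on $\mathbb{R}^3$ such that $a_{12}=\varphi f_1f_2$, $a_{13}=\varphi f_1f_3$, $a_{23}=\varphi f_2f_3$.
   Context: $\partial_i=\partial/\partial x_i$ on $C^\infty(\mathbb{R}^3)$ and $(f\smile g)(a,b)=f(a)g(b)$. An infinitesimal deformation of $C^\infty(\mathbb{R}^3)$ is called quasibasic if it equals $\varphi$ times a basic one, where a basic infinitesimal has the form $\sum_{i<j}c_{ij}f_i\partial_i\smile f_j\partial_j$ with real constants $c_{ij}$ and each $f_i$ a smooth function of $x_i$ alone. *)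

(* Defs.v *)
From Stdlib Require Import Reals List.
From Coquelicot Require Import Coquelicot.
Open Scope R_scope.

Definition R3 : Type := (R * R * R)%type.

(* Coordinate i of a point (0-based: 0 <-> x_1, 1 <-> x_2, otherwise x_3). *)
Definition coord (i : nat) (x : R3) : R :=
  match i with
  | O => fst (fst x)
  | S O => snd (fst x)
  | _ => snd x
  end.

Definition upd (i : nat) (x : R3) (t : R) : R3 :=
  match i with
  | O => (t, snd (fst x), snd x)
  | S O => (fst (fst x), t, snd x)
  | _ => (fst (fst x), snd (fst x), t)
  end.

Definition pd (i : nat) (f : R3 -> R) : R3 -> R :=
  fun x => Derive (fun t => f (upd i x t)) (coord i x).

Fixpoint iter_pd (l : list nat) (f : R3 -> R) : R3 -> R :=
  match l with
  | nil => f
  | i :: l' => pd i (iter_pd l' f)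
  end.

Definition smooth3 (f : R3 -> R) : Prop :=
  forall l : list nat,
    (forall x : R3, continuous (iter_pd l f) x) /\
    (forall (i : nat) (x : R3),
        ex_derive (fun t => iter_pd l f (upd i x t)) (coord i x)).

Definition smooth1 (g : R -> R) : Prop :=
  forall (n : nat) (t : R), ex_derive (Derive_n g n) t.

(* Main.v *)
Require Import Defs.
From Stdlib Require Import Reals List Lia Lra FunctionalExtensionality.
From Coquelicot Require Import Coquelicot.
Open Scope R_scope.

Lemma upd_coord i x : upd i x (coord i x) = x.
Proof. destruct x as [[a b] c]; destruct i as [|[|i]]; reflexivity. Qed.
Lemma coord_upd i x t : coord i (upd i x t) = t.
Proof. destruct x as [[a b] c]; destruct i as [|[|i]]; reflexivity. Qed.
Lemma upd_upd i x s t : upd i (upd i x s) t = upd i x t.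
Proof. destruct x as [[a b] c]; destruct i as [|[|i]]; reflexivity. Qed.

Definition Sk (n : nat) (f : R3 -> R) : Prop :=
  forall l, (length l <= n)%nat ->
    (forall x : R3, continuous (iter_pd l f) x) /\
    (forall (i : nat) (x : R3),
        ex_derive (fun t => iter_pd l f (upd i x t)) (coord i x)).

Lemma smooth_Sk f : smooth3 f <-> forall n, Sk n f.
Proof.
  split.
  - intros H n l _. apply H.
  - intros H l. apply (H (length l) l). lia.
Qed.

Lemma iter_app l i f : iter_pd (l ++ i :: nil) f = iter_pd l (pd i f).
Proof. induction l; simpl; [reflexivity|now rewrite IHl]. Qed.

Lemma Sk_le n f : Sk (S n) f -> Sk n f.
Proof. intros H l Hl. apply H. lia. Qed.

Lemma Sk_pd n i f : Sk (S n) f -> Sk n (pd i f).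
Proof. intros H l Hl. rewrite <- iter_app. apply H. rewrite length_app; simpl. lia. Qed.

Lemma exd_at (f : R3 -> R) i x s : (forall i x, ex_derive (fun t => f (upd i x t)) (coord i x)) ->
  ex_derive (fun t => f (upd i x t)) s.
Proof.
  intros H. specialize (H i (upd i x s)). rewrite coord_upd in H.
  eapply ex_derive_ext; [|exact H]. intros t; simpl. now rewrite upd_upd.
Qed.

Lemma Sk_plus n f g : Sk n f -> Sk n g ->
  forall l, (length l <= n)%nat -> iter_pd l (fun x => f x + g x) = fun x => iter_pd l f x + iter_pd l g x.
Proof.
  intros Hf Hg l; induction l as [|i l IH]; intros Hl; simpl; [reflexivity|].
  rewrite IH by (simpl in Hl; lia).
  apply functional_extensionality; intros x. unfold pd.
  apply Derive_plus; [apply (Hf l)|apply (Hg l)]; simpl in Hl; lia.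
Qed.

Lemma Sk_plus' n f g : Sk n f -> Sk n g -> Sk n (fun x => f x + g x).
Proof.
  intros Hf Hg l Hl. rewrite (Sk_plus n f g Hf Hg l Hl).
  destruct (Hf l Hl) as [Cf Df]; destruct (Hg l Hl) as [Cg Dg]. split.
  - intros x. apply (continuous_plus (iter_pd l f) (iter_pd l g)); auto.
  - intros i x. apply (ex_derive_plus (fun t => iter_pd l f (upd i x t)) (fun t => iter_pd l g (upd i x t))); auto.
Qed.

Lemma iter_const l c : exists d, iter_pd l (fun _ => c) = fun _ => d.
Proof.
  induction l as [|i l [d IH]]; simpl. exists c; reflexivity.
  rewrite IH. exists 0. apply functional_extensionality; intros x; unfold pd. apply Derive_const.
Qed.

Lemma Sk_const n c : Sk n (fun _ => c).
Proof.
  intros l _. destruct (iter_const l c) as [d ->]. split.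
  - intros; apply continuous_const.
  - intros; apply ex_derive_const.
Qed.

Lemma pd_mult i f g x :
  (forall i x, ex_derive (fun t => f (upd i x t)) (coord i x)) ->
  (forall i x, ex_derive (fun t => g (upd i x t)) (coord i x)) ->
  pd i (fun y => f y * g y) x = pd i f x * g x + f x * pd i g x.
Proof.
  intros Hf Hg. unfold pd.
  rewrite (Derive_mult (fun t => f (upd i x t)) (fun t => g (upd i x t))); auto.
  now rewrite upd_coord.
Qed.

Lemma Sk_mult n : forall f g, Sk n f -> Sk n g -> Sk n (fun x => f x * g x).
Proof.
  induction n as [|n IH]; intros f g Hf Hg l Hl.
  - destruct l; [|simpl in Hl; lia]. simpl.
    destruct (Hf nil) as [Cf Df]; [simpl; lia|]. destruct (Hg nil) as [Cg Dg]; [simpl; lia|].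
    split.
    + intros x. apply (continuous_mult f g); auto.
    + intros i x. apply (ex_derive_mult (fun t => f (upd i x t)) (fun t => g (upd i x t))); auto.
  - destruct l as [|j l'].
    + apply (IH f g (Sk_le _ _ Hf) (Sk_le _ _ Hg) nil). simpl; lia.
    + destruct (exists_last (l := j :: l')) as [l0 [i E]]; [discriminate|].
      rewrite E in Hl |- *. rewrite length_app in Hl; simpl in Hl.
      rewrite iter_app.
      assert (Ef : pd i (fun x => f x * g x) = fun x => pd i f x * g x + f x * pd i g x).
      { apply functional_extensionality; intros x. apply pd_mult.
        apply (Hf nil); simpl; lia. apply (Hg nil); simpl; lia. }
      rewrite Ef. apply (Sk_plus' n (fun x => pd i f x * g x) (fun x => f x * pd i g x)).
      * apply IH. apply Sk_pd; auto. apply Sk_le; auto.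
      * apply IH. apply Sk_le; auto. apply Sk_pd; auto.
      * lia.
Qed.

Lemma cont_inv (f : R3 -> R) x : continuous f x -> f x <> 0 -> continuous (fun y => / f y) x.
Proof.
  intros C N. apply (continuous_comp f (fun y => / y)); auto.
  apply (ex_derive_continuous (K:=R_AbsRing) (V:=R_NormedModule) (fun y => / y)). apply (ex_derive_inv (fun y => y)); auto. apply ex_derive_id.
Qed.

Lemma Sk_inv n : forall f, (forall x, f x <> 0) -> Sk n f -> Sk n (fun x => / f x).
Proof.
  induction n as [|n IH]; intros f Nf Hf l Hl.
  - destruct l; [|simpl in Hl; lia]. simpl.
    destruct (Hf nil) as [Cf Df]; [simpl; lia|].
    split.
    + intros x. apply cont_inv; auto.
    + intros i x. apply (ex_derive_inv (fun t => f (upd i x t))); [apply Df|]. simpl. rewrite upd_coord; auto.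
  - destruct l as [|j l'].
    + apply (IH f Nf (Sk_le _ _ Hf) nil). simpl; lia.
    + destruct (exists_last (l := j :: l')) as [l0 [i E]]; [discriminate|].
      rewrite E in Hl |- *. rewrite length_app in Hl; simpl in Hl.
      rewrite iter_app.
      assert (Ef : pd i (fun x => / f x) = fun x => (pd i f x * (fun _ => -1) x) * ((fun y => / f y) x * (fun y => / f y) x)).
      { apply functional_extensionality; intros x. unfold pd.
        destruct (Hf nil) as [Cf Df]; [simpl; lia|].
        rewrite (Derive_inv (fun t => f (upd i x t))); auto; rewrite upd_coord; auto.
        field. auto. }
      rewrite Ef. apply (Sk_mult n (fun x => pd i f x * (fun _ => -1) x) (fun x => (fun y => / f y) x * (fun y => / f y) x)).
      * apply Sk_mult. apply Sk_pd; auto. apply Sk_const.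
      * apply Sk_mult; apply IH; auto; apply Sk_le; auto.
      * lia.
Qed.

Lemma smooth_mult f g : smooth3 f -> smooth3 g -> smooth3 (fun x => f x * g x).
Proof. rewrite !smooth_Sk. intros; apply Sk_mult; auto. Qed.
Lemma smooth_inv f : (forall x, f x <> 0) -> smooth3 f -> smooth3 (fun x => / f x).
Proof. rewrite !smooth_Sk. intros; apply Sk_inv; auto. Qed.
Lemma smooth_const c : smooth3 (fun _ => c).
Proof. rewrite smooth_Sk. intros; apply Sk_const. Qed.
Lemma axis i j : (upd j = upd i /\ coord j = coord i) \/ (forall x t, coord i (upd j x t) = coord i x).
Proof.
  destruct i as [|[|i]]; destruct j as [|[|j]];
    try (left; split; reflexivity); right; intros [[a b] c] t; reflexivity.
Qed.

Lemma cont_coord i x : continuous (coord i) x.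
Proof.
  destruct x as [[a b] c]. destruct i as [|[|i]]; simpl.
  - apply (continuous_comp (U:=prod_UniformSpace (prod_UniformSpace R_UniformSpace R_UniformSpace) R_UniformSpace) fst fst).
    apply continuous_fst. apply continuous_fst.
  - apply (continuous_comp (U:=prod_UniformSpace (prod_UniformSpace R_UniformSpace R_UniformSpace) R_UniformSpace) fst snd).
    apply continuous_fst. apply continuous_snd.
  - apply continuous_snd.
Qed.

Lemma lift_iter (g : R -> R) i l :
  (exists k, iter_pd l (fun x => g (coord i x)) = fun x => Derive_n g k (coord i x)) \/
  iter_pd l (fun x => g (coord i x)) = fun _ => 0.
Proof.
  induction l as [|j l [[k IH]|IH]]; simpl.
  - left; exists 0%nat; reflexivity.
  - rewrite IH. destruct (axis i j) as [[E1 E2]|E].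
    + left; exists (S k). apply functional_extensionality; intros x; unfold pd.
      rewrite E1, E2. simpl. apply Derive_ext. intros t; now rewrite coord_upd.
    + right. apply functional_extensionality; intros x; unfold pd.
      rewrite (Derive_ext _ (fun _ => Derive_n g k (coord i x))). apply Derive_const.
      intros t; now rewrite E.
  - rewrite IH. right. apply functional_extensionality; intros x; unfold pd. apply Derive_const.
Qed.

Lemma lift_smooth g i : smooth1 g -> smooth3 (fun x => g (coord i x)).
Proof.
  intros Hg l. destruct (lift_iter g i l) as [[k ->]| ->]; split.
  - intros x. apply (continuous_comp (coord i) (Derive_n g k)). apply cont_coord.
    apply (ex_derive_continuous (K:=R_AbsRing) (V:=R_NormedModule)). apply Hg.
  - intros j x. destruct (axis i j) as [[E1 E2]|E].
    + rewrite E1, E2. eapply ex_derive_ext; [|apply (Hg k)].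
      intros t; simpl; now rewrite coord_upd.
    + eapply ex_derive_ext; [|apply (ex_derive_const (Derive_n g k (coord i x)))].
      intros t; simpl; now rewrite E.
  - intros; apply continuous_const.
  - intros; apply ex_derive_const.
Qed.

Lemma restr_Dn (F : R3 -> R) i p n t :
  Derive_n (fun t => F (upd i p t)) n t = iter_pd (repeat i n) F (upd i p t).
Proof.
  revert t; induction n as [|n IH]; intros t; simpl; [reflexivity|].
  rewrite (Derive_ext _ (fun s => iter_pd (repeat i n) F (upd i p s))) by apply IH.
  unfold pd. rewrite coord_upd. apply Derive_ext. intros s; now rewrite upd_upd.
Qed.

Lemma restr_smooth F i p : smooth3 F -> smooth1 (fun t => F (upd i p t)).
Proof.
  intros HF n t. eapply ex_derive_ext.
  { intros s. symmetry. apply restr_Dn. }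
  apply exd_at. apply HF.
Qed.

Lemma constancy F i : smooth3 F -> (forall x, pd i F x = 0) -> forall x t, F (upd i x t) = F x.
Proof.
  intros HF H0 x t.
  assert (D : forall s, is_derive (fun t => F (upd i x t)) s 0).
  { intros s. assert (E : ex_derive (fun t => F (upd i x t)) s) by (apply exd_at; apply (HF nil)).
    pose proof (Derive_correct _ _ E) as C.
    replace 0 with (Derive (fun t => F (upd i x t)) s); auto.
    rewrite <- (H0 (upd i x s)). unfold pd. rewrite coord_upd. apply Derive_ext.
    intros u; now rewrite upd_upd. }
  destruct (MVT_gen (fun t => F (upd i x t)) (coord i x) t (fun _ => 0)) as [c [_ Hc]].
  - intros; apply D.
  - intros y _. apply continuity_pt_filterlim.
    apply (ex_derive_continuous (K:=R_AbsRing) (V:=R_NormedModule)). eexists; apply D.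
  - rewrite upd_coord in Hc. lra.
Qed.
Lemma solve_num a b c d : a * / b = c * / d -> b <> 0 -> d <> 0 -> a = c * b / d.
Proof. intros H Hb Hd. apply (f_equal (fun z => z * b)) in H. field_simplify in H; auto.
  rewrite H. field; auto. Qed.
Lemma solve_den a b c d : a * / b = c * / d -> a <> 0 -> b <> 0 -> c <> 0 -> d <> 0 -> b = a * d / c.
Proof. intros H Ha Hb Hc Hd.
  assert (a * d = c * b). { apply (f_equal (fun z => z * b * d)) in H. field_simplify in H; auto. lra. }
  rewrite H0. field; auto. Qed.

Theorem theorem8 (a12 a13 a23 : R3 -> R) :
  smooth3 a12 -> smooth3 a13 -> smooth3 a23 ->
  (forall x, a12 x <> 0) -> (forall x, a13 x <> 0) -> (forall x, a23 x <> 0) ->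
  (forall x, pd 0 (fun y => a12 y / a13 y) x = 0) ->
  (forall x, pd 1 (fun y => a12 y / a23 y) x = 0) ->
  (forall x, pd 2 (fun y => a13 y / a23 y) x = 0) ->
  exists (f1 f2 f3 : R -> R) (phi : R3 -> R),
    smooth1 f1 /\ smooth1 f2 /\ smooth1 f3 /\ smooth3 phi /\
    forall x : R3,
      a12 x = phi x * f1 (coord 0 x) * f2 (coord 1 x) /\
      a13 x = phi x * f1 (coord 0 x) * f3 (coord 2 x) /\
      a23 x = phi x * f2 (coord 1 x) * f3 (coord 2 x).
Proof.
  intros S12 S13 S23 N12 N13 N23 H1 H2 H3.
  assert (SR : smooth3 (fun y => a12 y / a13 y)) by (apply smooth_mult; auto; apply smooth_inv; auto).
  assert (SS : smooth3 (fun y => a12 y / a23 y)) by (apply smooth_mult; auto; apply smooth_inv; auto).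
  assert (ST : smooth3 (fun y => a13 y / a23 y)) by (apply smooth_mult; auto; apply smooth_inv; auto).
  assert (STi : smooth3 (fun y => a23 y / a13 y)) by (apply smooth_mult; auto; apply smooth_inv; auto).
  assert (SRi : smooth3 (fun y => a13 y / a12 y)) by (apply smooth_mult; auto; apply smooth_inv; auto).
  pose proof (constancy _ 0 SR H1) as Hr.
  pose proof (constancy _ 1 SS H2) as Hs.
  pose proof (constancy _ 2 ST H3) as Ht.
  set (p0 := ((0,0),0) : R3).
  set (T0 := a13 p0 / a23 p0).
  exists (fun u => (fun y => a13 y / a23 y) (upd 0 p0 u)),
         (fun v => (fun y => T0 * (a23 y / a13 y)) (upd 1 p0 v)),
         (fun w => (fun y => a13 y / a12 y) (upd 2 p0 w)),
         (fun x => (a12 x * (fun u => (fun y => a23 y / a13 y) (upd 0 p0 u)) (coord 0 x)) *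
                   (fun v => (fun y => / T0 * (a13 y / a23 y)) (upd 1 p0 v)) (coord 1 x)).
  split; [apply (restr_smooth (fun y => a13 y / a23 y)); auto|].
  split; [apply (restr_smooth (fun y => T0 * (a23 y / a13 y))); apply (smooth_mult (fun _ => T0)); auto; apply smooth_const|].
  split; [apply (restr_smooth (fun y => a13 y / a12 y)); auto|].
  split.
  { apply (smooth_mult (fun x => a12 x * (fun u => (fun y => a23 y / a13 y) (upd 0 p0 u)) (coord 0 x))
                       (fun x => (fun v => (fun y => / T0 * (a13 y / a23 y)) (upd 1 p0 v)) (coord 1 x))).
    - apply smooth_mult; auto. apply (lift_smooth (fun u => (fun y => a23 y / a13 y) (upd 0 p0 u))).
      apply (restr_smooth (fun y => a23 y / a13 y)); auto.
    - apply (lift_smooth (fun v => (fun y => / T0 * (a13 y / a23 y)) (upd 1 p0 v))).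
      apply (restr_smooth (fun y => / T0 * (a13 y / a23 y))); apply (smooth_mult (fun _ => / T0)); auto; apply smooth_const. }
  intros [[u v] w]. unfold T0, p0. cbn [upd coord fst snd].
  assert (HA : a12 (u,v,w) / a13 (u,v,w) = a12 (0,v,w) / a13 (0,v,w)) by (symmetry; exact (Hr ((u,v),w) 0)).
  assert (HB : a12 (0,v,w) / a23 (0,v,w) = a12 (0,0,w) / a23 (0,0,w)) by (symmetry; exact (Hs ((0,v),w) 0)).
  assert (HC : a13 (0,v,w) / a23 (0,v,w) = a13 (0,v,0) / a23 (0,v,0)) by (symmetry; exact (Ht ((0,v),w) 0)).
  assert (HD : a13 (0,0,w) / a23 (0,0,w) = a13 (0,0,0) / a23 (0,0,0)) by (symmetry; exact (Ht ((0,0),w) 0)).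
  assert (HE : a12 (u,v,w) / a23 (u,v,w) = a12 (u,0,w) / a23 (u,0,w)) by (symmetry; exact (Hs ((u,v),w) 0)).
  assert (HF : a13 (u,0,w) / a23 (u,0,w) = a13 (u,0,0) / a23 (u,0,0)) by (symmetry; exact (Ht ((u,0),w) 0)).
  assert (HG : a12 (u,0,w) / a13 (u,0,w) = a12 (0,0,w) / a13 (0,0,w)) by (symmetry; exact (Hr ((u,0),w) 0)).
  unfold Rdiv in *.
  apply solve_den in HA; auto. apply solve_num in HB; auto. apply solve_num in HC; auto.
  apply solve_den in HD; auto. apply solve_den in HE; auto. apply solve_num in HG; auto.
  apply solve_den in HF; auto.
  split; [|split].
  - field; repeat split; auto.
  - rewrite HA, HB, HC, HD. field; repeat split; auto.
  - rewrite HE, HG, HF. field; repeat split; auto.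
Qed.
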